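(* Let $w \in \mathfrak{S}_n$ be a prism and let $i \in \textsf{supp}(w)$ be unconfined in the reduced words of $w$, with $i-1 \in \textsf{supp}(w)$ and $i+1 \in \textsf{supp}(w)$. Let $R = \{(a,2) : 0 \le a \le 4\} \cup \{(2,b) : 0 \le b \le 4\}$, $U = \{(a,b) : a \in \{0,1,2\},\ b \in \{3,4\}\}$ and $D = \{(a,b) : a \in \{3,4\},\ b \in \{0,1,2\}\}$. Then $w$ contains at least one of the following calibrated mesh patterns, each with calibration $x_2 = i$ and $y_2 = i$: (a) $(4123, R \cup D)$; (b) $(2341, R \cup U)$; (c) $(3142, R \cup U \cup D)$; (d) $(2413, R \cup U \cup D)$.
   Context: Reduced words, support, Bruhat order: $\sigma_i$ swaps $i,i+1$; a reduced word of $w$ is a minimal-length word $i_1\cdots i_\ell$ with $w=\sigma_{i_1}\cdots\sigma_{i_\ell}$; $\textsf{supp}(w)$ is the set of letters in any reduced word; $u\preceq w$ iff a reduced word of $u$ is a subword of one of $w$; $B(w)=\{u:u\preceq w\}$; $w$ is a prism if $B(w)\cong\mathbf{2}\times X$ for some poset $X$ ($\mathbf{2}$ the two-element chain). A letter $i$ appearing exactly once in a reduced word $s$ is unconfined in $s$ if that occurrence is neither between two $i+1$'s nor between two $i-1$'s; this then holds in all reduced words of $w$. Calibrated mesh patterns: let $p \in \mathfrak{S}_k$ (written in one-line notation) and $M \subseteq \{0,\dots,k\}^2$ (cell $(a,b)$ is the unit square with lower-left corner $(a,b)$ in the grid $[0,k+1]^2$ containing the graph $\{(j,p(j))\}$ of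 $p$). An occurrence of $p$ in $w \in \mathfrak{S}_n$ is a choice of positions $x_1<\cdots<x_k$ such that $w(x_1)\cdots w(x_k)$ is in the same relative order as $p(1)\cdots p(k)$; let $y_1<\cdots<y_k$ be the values $\{w(x_1),\dots,w(x_k)\}$ in increasing order, and set $x_0=y_0=0$, $x_{k+1}=y_{k+1}=n+1$. Such an occurrence is an occurrence of the mesh pattern $(p,M)$ if for every $(a,b)\in M$ there is no $x$ with $x_a < x < x_{a+1}$ and $y_b < w(x) < y_{b+1}$. A calibrated mesh pattern additionally prescribes values for some of the $x_a$ and $y_b$; $w$ contains it if $w$ has an occurrence of $(p,M)$ meeting those prescriptions. *)

(* Defs.v *)
(* Permutations of [n] = {1,...,n} are modelled by 'S_n
   (permutations of 'I_n = {0,...,n-1}); value/position k of the paper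
   corresponds to ordinal k-1. *)
From mathcomp Require Import all_boot all_order all_fingroup.
Set Implicit Arguments. Unset Strict Implicit. Unset Printing Implicit Defensive.

Definition sgm (n : nat) (i : nat) : 'S_n :=
  match (insub i.-1 : option 'I_n), (insub i : option 'I_n) with
  | Some a, Some b => if 0 < i then tperm a b else 1%g
  | _, _ => 1%g
  end.

Definition valid_word (n : nat) (s : seq nat) : bool := all (fun j => 0 < j < n) s.

(* the permutation sigma_{i1} o sigma_{i2} o ... o sigma_{il} (composition of maps;
   note (p * q) x = q (p x) in mathcomp) *)
Definition word_perm (n : nat) (s : seq nat) : 'S_n :=
  foldr (fun j acc => (acc * sgm n j)%g) 1%g s.

Definition reduced (n : nat) (w : 'S_n) (s : seq nat) : Prop :=
  valid_word n s /\ word_perm n s = w /\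
  forall t, valid_word n t -> word_perm n t = w -> size s <= size t.

Definition supp (n : nat) (w : 'S_n) (i : nat) : Prop :=
  exists s, reduced w s /\ i \in s.

(* Bruhat order via the subword property *)
Definition bruhat (n : nat) (u w : 'S_n) : Prop :=
  exists su sw, reduced u su /\ reduced w sw /\ subseq su sw.

(* w is a prism: the interval B(w) = {u | u <= w} is isomorphic as a poset
   to 2 x X for some poset X (product order, 2 = chain false < true) *)
Definition prism (n : nat) (w : 'S_n) : Prop :=
  exists (X : Type) (leX : X -> X -> Prop),
    (forall x, leX x x) /\
    (forall x y, leX x y -> leX y x -> x = y) /\
    (forall x y z, leX x y -> leX y z -> leX x z) /\
    exists (f : 'S_n -> bool * X) (g : bool * X -> 'S_n),
      (forall u, bruhat u w -> g (f u) = u) /\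
      (forall p, bruhat (g p) w /\ f (g p) = p) /\
      (forall u v, bruhat u w -> bruhat v w ->
         (bruhat u v <-> ((f u).1 ==> (f v).1) /\ leX (f u).2 (f v).2)).

Definition unconfined (s : seq nat) (i : nat) : Prop :=
  count_mem i s = 1 /\
  let k := index i s in
  ~ ((i.+1 \in take k s) && (i.+1 \in drop k.+1 s)) /\
  ~ ((0 < i) && (i.-1 \in take k s) && (i.-1 \in drop k.+1 s)).

(* one-line notation: w(x) for 1 <= x <= n (0 outside) *)
Definition oneline (n : nat) (w : 'S_n) (x : nat) : nat :=
  if 0 < x then
    match (insub x.-1 : option 'I_n) with Some j => (val (w j)).+1 | None => 0 end
  else 0.

(* z_0 = 0, z_a = a-th element of zs (1 <= a <= k), z_{k+1} = n+1 *)
Definition bnd (n k : nat) (zs : seq nat) (a : nat) : nat :=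
  if a == 0 then 0 else if a == k.+1 then n.+1 else nth 0 zs a.-1.

Definition occ_vals (n : nat) (w : 'S_n) (xs : seq nat) : seq nat :=
  sort leq (map (oneline w) xs).

Definition mesh_occ (n : nat) (w : 'S_n) (p : seq nat) (M : pred (nat * nat))
    (xs : seq nat) : Prop :=
  let k := size p in
  let ys := occ_vals w xs in
  size xs = k /\ sorted ltn xs /\ all (fun x => 0 < x <= n) xs /\
  (forall a b, a < k -> b < k ->
     (oneline w (nth 0 xs a) < oneline w (nth 0 xs b)) = (nth 0 p a < nth 0 p b)) /\
  (forall a b, M (a, b) -> forall x,
     bnd n k xs a < x < bnd n k xs a.+1 ->
     ~ (bnd n k ys b < oneline w x < bnd n k ys b.+1)).

Definition contains_cal (n : nat) (w : 'S_n) (p : seq nat) (M : pred (nat * nat))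
    (a0 xa b0 yb : nat) : Prop :=
  exists xs, mesh_occ w p M xs /\
    bnd n (size p) xs a0 = xa /\ bnd n (size p) (occ_vals w xs) b0 = yb.

Definition meshR : pred (nat * nat) :=
  fun c => ((c.1 <= 4) && (c.2 == 2)) || ((c.1 == 2) && (c.2 <= 4)).
Definition meshU : pred (nat * nat) :=
  fun c => (c.1 <= 2) && ((c.2 == 3) || (c.2 == 4)).
Definition meshD : pred (nat * nat) :=
  fun c => ((c.1 == 3) || (c.1 == 4)) && (c.2 <= 2).
Definition predU3 (A B C : pred (nat * nat)) : pred (nat * nat) :=
  fun c => A c || B c || C c.

(* Main.v *)
Require Import Defs.
From mathcomp Require Import all_boot all_order all_fingroup zify.
Set Implicit Arguments. Unset Strict Implicit. Unset Printing Implicit Defensive.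

Lemma tperm_val n (a b x : 'I_n) :
  nat_of_ord (tperm a b x) = if (x : nat) == a then (b : nat) else if (x : nat) == b then (a : nat) else x.
Proof.
case: tpermP => [->|->|/eqP hxa /eqP hxb]; first by rewrite eqxx.
  by case: eqP => [->|_]; rewrite ?eqxx.
by rewrite ifN ?ifN //; apply/eqP => /val_inj.
Qed.

Lemma tperm_adj_lt n (a b x y : 'I_n) : (b : nat) = (a : nat).+1 ->
  ~~ ((x == a) && (y == b)) -> ~~ ((x == b) && (y == a)) ->
  (tperm a b x < tperm a b y) = (x < y).
Proof.
move=> hab h1 h2; rewrite !tperm_val.
move: h1 h2.
rewrite -[x == a]/((x : nat) == a) -[x == b]/((x : nat) == b) -[y == a]/((y : nat) == a) -[y == b]/((y : nat) == b).
case: ((x : nat) =P a); case: ((x : nat) =P b); case: ((y : nat) =P a); case: ((y : nat) =P b);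
  move=> /= *; lia.
Qed.

Lemma sgm_tperm n k : 0 < k < n ->
  exists a b : 'I_n, [/\ (a : nat) = k.-1, (b : nat) = k & sgm n k = tperm a b].
Proof.
move=> /andP[hk0 hkn].
have hk1 : k.-1 < n by lia.
exists (Ordinal hk1), (Ordinal hkn); split => //.
by rewrite /sgm (insubT (fun x => x < n) hk1) (insubT (fun x => x < n) hkn) hk0.
Qed.

Lemma sgm_val n k (x : 'I_n) : 0 < k < n ->
  nat_of_ord (sgm n k x) = if (x : nat) == k.-1 then k else if (x : nat) == k then k.-1 else x.
Proof.
by move=> /sgm_tperm [a [b [ha hb ->]]]; rewrite tperm_val -ha -hb.
Qed.

Definition ninv n (p : 'S_n) : nat :=
  \sum_(z : 'I_n * 'I_n) ((z.1 < z.2) && (p z.2 < p z.1)).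

Lemma two_point (T : finType) (f g : T -> nat) z1 z2 : z1 != z2 ->
  (forall z, z != z1 -> z != z2 -> f z = g z) ->
  \sum_z f z + g z1 + g z2 = \sum_z g z + f z1 + f z2.
Proof.
move=> hz H.
rewrite [\sum_z f z](bigD1 z1) //= [\sum_(i | i != z1) f i](bigD1 z2) /=; last by rewrite eq_sym.
rewrite [\sum_z g z](bigD1 z1) //= [\sum_(i | i != z1) g i](bigD1 z2) /=; last by rewrite eq_sym.
have -> : \sum_(i | (i != z1) && (i != z2)) f i = \sum_(i | (i != z1) && (i != z2)) g i.
  by apply: eq_bigr => z /andP[h1 h2]; apply: H.
lia.
Qed.

(* left multiplication in function terms: values swapped *)
Lemma ninv_mulr n (p : 'S_n) (a b : 'I_n) : (b : nat) = (a : nat).+1 ->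
  ninv (p * tperm a b)%g + ((p^-1)%g b < (p^-1)%g a) = ninv p + ((p^-1)%g a < (p^-1)%g b).
Proof.
move=> hab.
set al := (p^-1)%g a; set be := (p^-1)%g b.
have hpa : p al = a by rewrite /al permKV.
have hpb : p be = b by rewrite /be permKV.
have hab' : al != be by apply/eqP => e; move: hpa; rewrite e hpb => e'; move: hab; rewrite e'; lia.
have hz : (al, be) != (be, al) by apply/eqP => -[e _]; move: hab'; rewrite e eqxx.
have hrest : forall z : 'I_n * 'I_n, z != (al, be) -> z != (be, al) ->
   nat_of_bool ((z.1 < z.2) && (p z.2 < p z.1)) = nat_of_bool ((z.1 < z.2) && ((p * tperm a b)%g z.2 < (p * tperm a b)%g z.1)).
  move=> [z1 z2] h1 h2 /=; rewrite !permM tperm_adj_lt //.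
  + apply/negP => /andP[/eqP e1 /eqP e2]; move: h2; rewrite /al /be -e1 -e2 !permK eqxx //.
  + apply/negP => /andP[/eqP e1 /eqP e2]; move: h1; rewrite /al /be -e1 -e2 !permK eqxx //.
have := two_point hz hrest.
rewrite /ninv /= !permM hpa hpb tpermL tpermR.
have -> : (b < a) = false by lia.
have -> : (a < b) = true by lia.
rewrite !andbF !andbT /= !addn0. by move/esym.
Qed.

(* right multiplication in function terms: positions swapped *)
Lemma ninv_mull n (p : 'S_n) (a b : 'I_n) : (b : nat) = (a : nat).+1 ->
  ninv (tperm a b * p)%g + (p b < p a) = ninv p + (p a < p b).
Proof.
move=> hab.
set t := tperm a b.
have ht : injective (fun z : 'I_n * 'I_n => (t z.1, t z.2)).
  by move=> [x1 x2] [y1 y2] /= [/perm_inj -> /perm_inj ->].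
have E : ninv (t * p)%g = \sum_(z : 'I_n * 'I_n) nat_of_bool ((t z.1 < t z.2) && (p z.2 < p z.1)).
  rewrite /ninv (reindex_inj ht) /=; apply: eq_bigr => z _.
  by rewrite !permM !tpermK.
have hab' : a != b by apply/eqP => e; move: hab; rewrite e; lia.
have hz : (a, b) != (b, a) by apply/eqP => -[e _]; move: hab'; rewrite e eqxx.
have hrest : forall z : 'I_n * 'I_n, z != (a, b) -> z != (b, a) ->
   nat_of_bool ((z.1 < z.2) && (p z.2 < p z.1)) = nat_of_bool ((t z.1 < t z.2) && (p z.2 < p z.1)).
  move=> [z1 z2] h1 h2 /=; rewrite /t tperm_adj_lt //.
have := two_point hz hrest.
rewrite E /= /t tpermL tpermR.
have -> : (b < a) = false by lia.
have -> : (a < b) = true by lia.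
rewrite /= !addn0. by move/esym.
Qed.

Lemma wp_cons n k t : word_perm n (k :: t) = (word_perm n t * sgm n k)%g.
Proof. by []. Qed.

Lemma wp_cat n L R : word_perm n (L ++ R) = (word_perm n R * word_perm n L)%g.
Proof.
elim: L => [|k L IH] /=; first by rewrite mulg1.
by rewrite IH mulgA.
Qed.

Lemma valid_cat n L R : valid_word n (L ++ R) = valid_word n L && valid_word n R.
Proof. exact: all_cat. Qed.

Lemma ninv_cons_le n k t : 0 < k < n ->
  ninv (word_perm n (k :: t)) <= (ninv (word_perm n t)).+1.
Proof.
move=> hk; move: (hk) => /sgm_tperm [a [b [ha hb e]]].
rewrite wp_cons e.
have := @ninv_mulr n (word_perm n t) a b ltac:(lia).
set x := ninv _; set y := ninv _. set c := nat_of_bool _; set d := nat_of_bool _.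
have : d <= 1 by rewrite /d; case: (_ < _).
lia.
Qed.

Lemma ninv_le_size n t : valid_word n t -> ninv (word_perm n t) <= size t.
Proof.
elim: t => [|k t IH].
  move=> _; rewrite /ninv big1 // => z _; rewrite /= !perm1.
  by case: (ltngtP z.1 z.2).
move=> /andP[hk hv]; have := ninv_cons_le t hk; have := IH hv.
have -> : size (k :: t) = (size t).+1 by []. lia.
Qed.

Lemma tight_cons n k t : valid_word n (k :: t) ->
  size (k :: t) = ninv (word_perm n (k :: t)) -> size t = ninv (word_perm n t).
Proof.
move=> /andP[hk hv]; rewrite [size _]/= => hs.
have := ninv_cons_le t hk; have := ninv_le_size hv; lia.
Qed.

Lemma tight_catr n L R : valid_word n (L ++ R) ->
  size (L ++ R) = ninv (word_perm n (L ++ R)) -> size R = ninv (word_perm n R).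
Proof.
elim: L => [|k L IH] //= hv hs.
apply: IH; first by case/andP: hv.
exact: (tight_cons hv hs).
Qed.

Lemma ninv_catl_le n L R : valid_word n R ->
  ninv (word_perm n (L ++ R)) <= ninv (word_perm n L) + size R.
Proof.
elim: R L => [|k R IH] L /=; first by rewrite cats0 addn0.
move=> /andP[hk hv].
rewrite -cat_rcons.
have := IH (rcons L k) hv.
have E : word_perm n (rcons L k) = (sgm n k * word_perm n L)%g.
  by rewrite -cats1 wp_cat; congr (_ * _)%g; rewrite /word_perm /= mul1g.
rewrite E.
move: (hk) => /sgm_tperm [a [b [ha hb ->]]].
have := @ninv_mull n (word_perm n L) a b ltac:(lia).
set x := ninv _; set y := ninv _. set c := nat_of_bool _; set d := nat_of_bool _.
have : d <= 1 by rewrite /d; case: (_ < _).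
lia.
Qed.

Lemma tight_catl n L R : valid_word n (L ++ R) ->
  size (L ++ R) = ninv (word_perm n (L ++ R)) -> size L = ninv (word_perm n L).
Proof.
rewrite valid_cat => /andP[hL hR] hs.
have := ninv_catl_le L hR; have := ninv_le_size hL.
rewrite size_cat in hs. lia.
Qed.

Lemma perm_eq1 n (q : 'S_n) :
  (forall a b : 'I_n, (b : nat) = (a : nat).+1 -> q a < q b) -> q = 1%g.
Proof.
move=> H.
have H1 : forall m (hm : m < n), m <= q (Ordinal hm).
  elim=> [|m IH] hm //.
  have hm' : m < n by lia.
  have := IH hm'; have := H (Ordinal hm') (Ordinal hm) erefl; lia.
have H2 : forall d m (hm : m < n), m + d = n.-1 -> q (Ordinal hm) <= m.
  elim=> [|d IH] m hm hd.
    have := ltn_ord (q (Ordinal hm)); lia.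
  have hm' : m.+1 < n by lia.
  have := IH m.+1 hm' ltac:(lia); have := H (Ordinal hm) (Ordinal hm') erefl; lia.
apply/permP => x; rewrite perm1.
case: x => m hm.
have h3 : m + (n.-1 - m) = n.-1 by lia.
have := H1 m hm; have := H2 (n.-1 - m) m hm h3. move=> *; apply: val_inj => /=; lia.
Qed.

Lemma exists_word n (p : 'S_n) :
  exists t, [/\ valid_word n t, word_perm n t = p & size t = ninv p].
Proof.
have [m hm] := ubnP (ninv p); elim: m p hm => // m IH p hm.
case: (eqVneq p 1%g) => [->|hp1].
  exists [::]; split => //; rewrite /ninv big1 // => z _; rewrite !perm1.
  by case: (ltngtP z.1 z.2).
have [a [b [hab hlt]]] : exists a b : 'I_n, (b : nat) = (a : nat).+1 /\ (p^-1)%g b < (p^-1)%g a.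
  case: (boolP [exists a : 'I_n, exists b : 'I_n, ((b : nat) == (a : nat).+1) && ((p^-1)%g b < (p^-1)%g a)]).
    by move/existsP => [a /existsP [b /andP [/eqP hab hlt]]]; exists a, b.
  move=> hn; exfalso; apply/negP: hp1; rewrite negbK; apply/eqP.
  apply: invg_inj; rewrite invg1; apply: perm_eq1 => a b hab.
  case: ltngtP => // h.
    exfalso; move/negP: hn; apply; apply/existsP; exists a; apply/existsP; exists b.
    by rewrite hab eqxx h.
  by move/val_inj/perm_inj: h => e; move: hab; rewrite e; lia.
set p' := (p * tperm a b)%g.
have hinv : forall x, (p'^-1)%g x = (p^-1)%g (tperm a b x).
  by move=> x; rewrite /p' invMg permM tpermV.
have hpp : (p' * tperm a b)%g = p by rewrite /p' -mulgA tperm2 mulg1.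
have := @ninv_mulr n p' a b hab.
rewrite hpp !hinv tpermL tpermR.
have -> : ((p^-1)%g a < (p^-1)%g b) = false by apply/negbTE; rewrite -leqNgt ltnW.
rewrite hlt /= addn0 => hI.
have [t' [hv hw hs]] := IH p' ltac:(lia).
have hk : 0 < b < n by rewrite ltn_ord hab.
exists ((b : nat) :: t'); split.
- by rewrite /valid_word /= hk.
- rewrite wp_cons hw.
  have [a' [b' [ha' hb' ->]]] := sgm_tperm hk.
  have -> : a' = a by apply: val_inj; rewrite /= ha' hab.
  have -> : b' = b by apply: val_inj.
  by rewrite hpp.
- by rewrite /= hs; lia.
Qed.

Lemma reduced_tight n (w : 'S_n) s : reduced w s ->
  [/\ valid_word n s, word_perm n s = w & size s = ninv w].
Proof.
move=> [hv [hw hmin]]; split => //.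
have [t [ht1 ht2 ht3]] := exists_word w.
have := hmin t ht1 ht2; have := ninv_le_size hv; rewrite hw; lia.
Qed.

Lemma pres n t j : valid_word n t -> j \notin t ->
  forall x : 'I_n, (word_perm n t x < j) = (x < j).
Proof.
elim: t => [|k t IH] //=; first by move=> _ _ x; rewrite perm1.
move=> /andP[hk hv]; rewrite in_cons negb_or => /andP[hjk hj] x.
rewrite permM sgm_val // -(IH hv hj x).
move: (word_perm n t x) => y.
move/eqP: hjk => hjk.
case: ((y : nat) =P k.-1); case: ((y : nat) =P k) => /= *; lia.
Qed.


Lemma cross n t j : valid_word n t -> size t = ninv (word_perm n t) -> j \in t ->
  exists x y : 'I_n, [/\ x < j, j <= y & word_perm n t y < word_perm n t x].
Proof.
elim: t => [|k t IH] //.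
move=> hv hs hj.
have hs' := tight_cons hv hs.
move: hv => /andP[hk hv].
have [a [b [ha hb e]]] := sgm_tperm hk.
have hab : (b : nat) = (a : nat).+1 by lia.
have := @ninv_mulr n (word_perm n t) a b hab.
rewrite -e -wp_cons -hs [size _]/= -hs'.
set p := word_perm n t.
move=> H.
have h : (p^-1)%g a < (p^-1)%g b.
  by move: H; case: ((p^-1)%g a < (p^-1)%g b) => //; rewrite addn0; lia.
rewrite wp_cons -/p e.
case: (boolP (j \in t)) => hjt.
  have [x [y [hx hy hxy]]] := IH hv hs' hjt.
  exists x, y; split => //; rewrite !permM tperm_adj_lt //.
  - apply/negP => /andP[/eqP e1 /eqP e2].
    have : y = (p^-1)%g a by rewrite -e1 permK.
    have : x = (p^-1)%g b by rewrite -e2 permK.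
    move=> ex ey; move: h; rewrite -ex -ey; lia.
  - apply/negP => /andP[/eqP e1 /eqP e2]; move: hxy; rewrite e1 e2; lia.
have hjk : j = k by move: hj; rewrite in_cons (negbTE hjt) orbF => /eqP.
have hP := pres hv hjt.
exists ((p^-1)%g a), ((p^-1)%g b); split.
- by rewrite -hP permKV; lia.
- by rewrite leqNgt -hP permKV; lia.
- by rewrite !permM !permKV tpermL tpermR; lia.
Qed.

Lemma Gfix n t l (o1 o2 : 'I_n) : valid_word n t -> size t = ninv (word_perm n t) ->
  l \notin t -> (o1 : nat) = l.-1 -> (o2 : nat) = l -> 0 < l ->
  ((word_perm n t o1 : nat) == l.-1) = (l.-1 \notin t) /\
  ((word_perm n t o2 : nat) == l) = (l.+1 \notin t).
Proof.
move=> hv hs hl h1 h2 hl0.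
have Pl := pres hv hl.
split.
  case: (boolP (l.-1 \in t)) => hin /=.
    have [x [y [hx hy hxy]]] := cross hv hs hin.
    have e1 := Pl x; have e2 := Pl y.
    have ey : y = o1.
      apply: val_inj => /=. have : (word_perm n t y < l) by lia.
      rewrite Pl; lia.
    move: hxy; rewrite ey => hxy.
    apply/eqP; lia.
  have := pres hv hin o1; have := Pl o1; move=> e1 e2; apply/eqP; lia.
case: (boolP (l.+1 \in t)) => hin /=.
  have [x [y [hx hy hxy]]] := cross hv hs hin.
  have e1 := Pl x; have e2 := Pl y.
  case: (ltnP x l) => hxl; first lia.
  have ex : x = o2 by apply: val_inj => /=; lia.
  move: hxy; rewrite ex => hxy.
  apply/eqP => e3; lia.
have := pres hv hin o2; have := Pl o2; move=> e1 e2; apply/eqP; lia.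
Qed.

Lemma ord_of n x : 0 < x <= n -> exists o : 'I_n, x = o.+1.
Proof.
move=> hx; have hx' : x.-1 < n by lia.
by exists (Ordinal hx') => /=; lia.
Qed.

Lemma oneline_ord n (w : 'S_n) (o : 'I_n) : oneline w o.+1 = (w o).+1.
Proof.
rewrite /oneline /= (insubT (fun x => x < n) (ltn_ord o)) /=.
by congr (_.+1); congr (nat_of_ord (w _)); apply: val_inj.
Qed.

Lemma valid_mem n s j : valid_word n s -> j \in s -> 0 < j < n.
Proof. by move=> /allP H /H. Qed.
Lemma sort_perm4 (ys : seq nat) (idx : seq nat) :
  sorted leq ys -> size ys = 4 -> perm_eq idx (iota 0 4) ->
  sort leq (map (nth 0 ys) idx) = ys.
Proof.
move=> hs hz hp.
have -> : sort leq (map (nth 0 ys) idx) = sort leq (map (nth 0 ys) (iota 0 4)).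
  apply/perm_sortP; [exact: leq_total|exact: leq_trans|exact: anti_leq|].
  exact: perm_map.
have -> : map (nth 0 ys) (iota 0 4) = ys.
  by case: ys hs hz => [|y0 [|y1 [|y2 [|y3 [|]]]]].
exact: (sorted_sort leq_trans hs).
Qed.

Definition Wgood (n : nat) (W : nat -> nat) : Prop :=
  (forall x, 0 < x <= n -> 0 < W x <= n) /\
  (forall x, (x == 0) || (n < x) -> W x = 0) /\
  (forall x y, 0 < x <= n -> 0 < y <= n -> W x = W y -> x = y) /\
  (forall v, 0 < v <= n -> exists2 x, 0 < x <= n & W x = v).

Lemma caseA n (w : 'S_n) i A B :
  Wgood n (oneline w) ->
  0 < A < i -> i.+1 = B -> B <= n -> i.+1 < oneline w A -> oneline w B = i ->
  (forall x, 0 < x <= i -> x = A \/ oneline w x <= i) ->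
  (forall x, i < x <= n -> x = B \/ i < oneline w x) ->
  contains_cal w [:: 4; 1; 2; 3] (predU meshR meshD) 2 i 2 i.
Proof.
set W := oneline w.
move=> [Hr [H0 [Hinj Hsurj]]] hA hB hBn hWA hWB F1 F2.
have [P hP hWP] := Hsurj i.+1 ltac:(lia).
have hP2 : i.+1 < P.
  case: (leqP P i) => h.
    case: (F1 P ltac:(lia)) => [eP|]; last lia. by move: hWP; rewrite eP; lia.
  have : P <> B by move=> eP; move: hWP; rewrite eP; lia.
  lia.
have hWi : 0 < W i < i.
  have := Hr i ltac:(lia). case: (F1 i ltac:(lia)) => [|h]; first lia.
  have : W i <> W B by move/Hinj; lia. lia.
have hWi1 : W i.+1 = i by rewrite hB.
have hys : occ_vals w [:: A; i; i.+1; P] = [:: W i; i; i.+1; W A].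
  rewrite /occ_vals /= -/W hWP hWi1.
  rewrite (_ : [:: W A; W i; i; i.+1] = map (nth 0 [:: W i; i; i.+1; W A]) [:: 3; 0; 1; 2]) //.
  apply: sort_perm4 => //=. rewrite !andbT; apply/and3P; split; lia.
exists [:: A; i; i.+1; P]; split; last by rewrite hys.
rewrite /mesh_occ /= hys; split => //; split; first by rewrite /= !andbT; apply/and3P; split; lia.
split; first by rewrite /= !andbT; apply/and4P; split; lia.
split.
  move=> a b ha hb. rewrite -/W.
  case: a ha => [|[|[|[|a]]]] ha //; case: b hb => [|[|[|[|b]]]] hb //=; rewrite ?hWP ?hWi1; lia.
rewrite -/W. move=> a b hM x hx hy.
have /andP[ha hb] : (a <= 4) && (b <= 4) by (move: hM; rewrite /= /meshR /meshU /meshD /predU3 /=; lia).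
move: (F1 x) (F2 x) (Hr x) (H0 x) hM hx hy.
case: a ha => [|[|[|[|[|a]]]]] ha //; case: b hb => [|[|[|[|[|b]]]]] hb //;
rewrite /= /meshR /meshU /meshD /predU3 /bnd /=; lia.
Qed.

Lemma caseB n (w : 'S_n) i A B :
  Wgood n (oneline w) ->
  0 < A -> A = i -> i.+1 < B -> B <= n -> oneline w A = i.+1 -> oneline w B < i ->
  (forall x, 0 < x <= i -> x = A \/ oneline w x <= i) ->
  (forall x, i < x <= n -> x = B \/ i < oneline w x) ->
  contains_cal w [:: 2; 3; 4; 1] (predU meshR meshU) 2 i 2 i.
Proof.
set W := oneline w.
move=> [Hr [H0 [Hinj Hsurj]]] hA0 hA hB hBn hWA hWB F1 F2.
have [Q hQ hWQ] := Hsurj i ltac:(lia).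
have hQ2 : Q < i.
  case: (leqP Q i) => h.
    have : Q <> A by move=> eQ; move: hWQ; rewrite eQ; lia.
    lia.
  case: (F2 Q ltac:(lia)) => [eQ|]; last lia. by move: hWQ; rewrite eQ; lia.
have hWi : W i = i.+1 by rewrite -{1}hA.
have hWi1 : i.+1 < W i.+1.
  have := Hr i.+1 ltac:(lia). case: (F2 i.+1 ltac:(lia)) => [|h]; first lia.
  have : W i.+1 <> W A by move/Hinj; lia. lia.
have hys : occ_vals w [:: Q; i; i.+1; B] = [:: W B; i; i.+1; W i.+1].
  rewrite /occ_vals /= -/W hWQ hWi.
  rewrite (_ : [:: i; i.+1; W i.+1; W B] = map (nth 0 [:: W B; i; i.+1; W i.+1]) [:: 1; 2; 3; 0]) //.
  apply: sort_perm4 => //=. have := Hr B ltac:(lia). move=> ?. rewrite !andbT; apply/and3P; split; lia.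
exists [:: Q; i; i.+1; B]; split; last by rewrite hys.
rewrite /mesh_occ /= hys; split => //; split; first by rewrite /= !andbT; apply/and3P; split; lia.
split; first by rewrite /= !andbT; apply/and4P; split; lia.
split.
  move=> a b ha hb. rewrite -/W.
  case: a ha => [|[|[|[|a]]]] ha //; case: b hb => [|[|[|[|b]]]] hb //=; rewrite ?hWQ ?hWi; lia.
rewrite -/W. move=> a b hM x hx hy.
have /andP[ha hb] : (a <= 4) && (b <= 4) by (move: hM; rewrite /= /meshR /meshU /meshD /predU3 /=; lia).
move: (F1 x) (F2 x) (Hr x) (H0 x) hM hx hy.
case: a ha => [|[|[|[|[|a]]]]] ha //; case: b hb => [|[|[|[|[|b]]]]] hb //;
rewrite /= /meshR /meshU /meshD /predU3 /bnd /=; lia.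
Qed.

Lemma caseC n (w : 'S_n) i A B :
  Wgood n (oneline w) ->
  0 < A -> A = i -> i.+1 = B -> B <= n -> i.+1 < oneline w A -> oneline w B < i ->
  (forall x, 0 < x <= i -> x = A \/ oneline w x <= i) ->
  (forall x, i < x <= n -> x = B \/ i < oneline w x) ->
  contains_cal w [:: 2; 4; 1; 3] (predU3 meshR meshU meshD) 2 i 2 i.
Proof.
set W := oneline w.
move=> [Hr [H0 [Hinj Hsurj]]] hA0 hA hB hBn hWA hWB F1 F2.
have [Q hQ hWQ] := Hsurj i ltac:(lia).
have [P hP hWP] := Hsurj i.+1 ltac:(lia).
have hQ2 : Q < i.
  case: (leqP Q i) => h.
    have : Q <> A by move=> eQ; move: hWQ; rewrite eQ; lia.
    lia.
  case: (F2 Q ltac:(lia)) => [eQ|]; last lia. by move: hWQ; rewrite eQ; lia.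
have hP2 : i.+1 < P.
  case: (leqP P i) => h.
    case: (F1 P ltac:(lia)) => [eP|]; last lia. by move: hWP; rewrite eP; lia.
  have : P <> B by move=> eP; move: hWP; rewrite eP; lia.
  lia.
have hWi : W i = W A by rewrite hA.
have hWi1 : W i.+1 = W B by rewrite hB.
have hys : occ_vals w [:: Q; i; i.+1; P] = [:: W B; i; i.+1; W A].
  rewrite /occ_vals /= -/W hWQ hWi hWi1 hWP.
  rewrite (_ : [:: i; W A; W B; i.+1] = map (nth 0 [:: W B; i; i.+1; W A]) [:: 1; 3; 0; 2]) //.
  apply: sort_perm4 => //=. have := Hr B ltac:(lia). move=> ?. rewrite !andbT; apply/and3P; split; lia.
exists [:: Q; i; i.+1; P]; split; last by rewrite hys.
rewrite /mesh_occ /= hys; split => //; split; first by rewrite /= !andbT; apply/and3P; split; lia.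
split; first by rewrite /= !andbT; apply/and4P; split; lia.
split.
  move=> a b ha hb. rewrite -/W.
  case: a ha => [|[|[|[|a]]]] ha //; case: b hb => [|[|[|[|b]]]] hb //=; rewrite ?hWQ ?hWi ?hWi1 ?hWP; lia.
rewrite -/W. move=> a b hM x hx hy.
have /andP[ha hb] : (a <= 4) && (b <= 4) by (move: hM; rewrite /= /meshR /meshU /meshD /predU3 /=; lia).
move: (F1 x) (F2 x) (Hr x) (H0 x) hM hx hy.
case: a ha => [|[|[|[|[|a]]]]] ha //; case: b hb => [|[|[|[|[|b]]]]] hb //;
rewrite /= /meshR /meshU /meshD /predU3 /bnd /=; lia.
Qed.

Lemma caseD n (w : 'S_n) i A B :
  Wgood n (oneline w) ->
  0 < A < i -> i.+1 < B -> B <= n -> oneline w A = i.+1 -> oneline w B = i ->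
  (forall x, 0 < x <= i -> x = A \/ oneline w x <= i) ->
  (forall x, i < x <= n -> x = B \/ i < oneline w x) ->
  contains_cal w [:: 3; 1; 4; 2] (predU3 meshR meshU meshD) 2 i 2 i.
Proof.
set W := oneline w.
move=> [Hr [H0 [Hinj Hsurj]]] hA hB hBn hWA hWB F1 F2.
have hWi : 0 < W i < i.
  have := Hr i ltac:(lia). case: (F1 i ltac:(lia)) => [|h]; first lia.
  have : W i <> W B by move/Hinj; lia. lia.
have hWi1 : i.+1 < W i.+1.
  have := Hr i.+1 ltac:(lia). case: (F2 i.+1 ltac:(lia)) => [|h]; first lia.
  have : W i.+1 <> W A by move/Hinj; lia. lia.
have hys : occ_vals w [:: A; i; i.+1; B] = [:: W i; i; i.+1; W i.+1].
  rewrite /occ_vals /= -/W hWA hWB.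
  rewrite (_ : [:: i.+1; W i; W i.+1; i] = map (nth 0 [:: W i; i; i.+1; W i.+1]) [:: 2; 0; 3; 1]) //.
  apply: sort_perm4 => //=. rewrite !andbT; apply/and3P; split; lia.
exists [:: A; i; i.+1; B]; split; last by rewrite hys.
rewrite /mesh_occ /= hys; split => //; split; first by rewrite /= !andbT; apply/and3P; split; lia.
split; first by rewrite /= !andbT; apply/and4P; split; lia.
split.
  move=> a b ha hb. rewrite -/W.
  case: a ha => [|[|[|[|a]]]] ha //; case: b hb => [|[|[|[|b]]]] hb //=; rewrite ?hWA ?hWB; lia.
rewrite -/W. move=> a b hM x hx hy.
have /andP[ha hb] : (a <= 4) && (b <= 4) by (move: hM; rewrite /= /meshR /meshU /meshD /predU3 /=; lia).
move: (F1 x) (F2 x) (Hr x) (H0 x) hM hx hy.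
case: a ha => [|[|[|[|[|a]]]]] ha //; case: b hb => [|[|[|[|[|b]]]]] hb //;
rewrite /= /meshR /meshU /meshD /predU3 /bnd /=; lia.
Qed.

Lemma Wgood_oneline n (w : 'S_n) : Wgood n (oneline w).
Proof.
split; [|split; [|split]].
- move=> x /ord_of [o ->]; rewrite oneline_ord; have := ltn_ord (w o); lia.
- move=> x /orP [/eqP ->|hx] //.
  rewrite /oneline; case: ifP => // _.
  by rewrite insubN //; lia.
- move=> x y /ord_of [o ->] /ord_of [o' ->]; rewrite !oneline_ord => -[/val_inj/perm_inj ->].
  by [].
- move=> v /ord_of [o ->]; exists ((w^-1)%g o).+1; first by have := ltn_ord ((w^-1)%g o); lia.
  by rewrite oneline_ord permKV.
Qed.

Lemma core n (w : 'S_n) i A B (xL1 xR1 xL2 xR2 : bool) :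
  Wgood n (oneline w) -> 0 < A <= i -> i < B <= n ->
  i.+1 <= oneline w A -> oneline w B <= i ->
  (forall x, 0 < x <= i -> x = A \/ oneline w x <= i) ->
  (forall x, i < x <= n -> x = B \/ i < oneline w x) ->
  (oneline w B == i) = ~~ xL1 -> (A == i) = ~~ xR1 ->
  (oneline w A == i.+1) = ~~ xL2 -> (B == i.+1) = ~~ xR2 ->
  xL1 || xR1 -> ~~ (xL1 && xR1) -> xL2 || xR2 -> ~~ (xL2 && xR2) ->
  contains_cal w [:: 4; 1; 2; 3] (predU meshR meshD) 2 i 2 i \/
  contains_cal w [:: 2; 3; 4; 1] (predU meshR meshU) 2 i 2 i \/
  contains_cal w [:: 3; 1; 4; 2] (predU3 meshR meshU meshD) 2 i 2 i \/
  contains_cal w [:: 2; 4; 1; 3] (predU3 meshR meshU meshD) 2 i 2 i.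
Proof.
move=> hW hA hB hWA hWB F1 F2 b1 b2 b3 b4.
case: xL1 b1; case: xR1 b2 => //= b2 b1 _ _;
case: xL2 b3; case: xR2 b4 => //= b4 b3 _ _.
all: first [ (left; apply: (caseA hW _ _ _ _ _ F1 F2); lia)
           | (right; left; apply: (caseB hW _ _ _ _ _ _ F1 F2); lia)
           | (right; right; left; apply: (caseD hW _ _ _ _ _ F1 F2); lia)
           | (right; right; right; apply: (caseC hW _ _ _ _ _ _ F1 F2); lia) ].
Qed.

Unset Implicit Arguments.

Theorem proposition3p6 (n : nat) (w : 'S_n) (i : nat) :
  prism w ->
  supp w i ->
  (forall s, reduced w s -> unconfined s i) ->
  supp w i.-1 -> supp w i.+1 ->
  contains_cal w [:: 4; 1; 2; 3] (predU meshR meshD) 2 i 2 i \/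
  contains_cal w [:: 2; 3; 4; 1] (predU meshR meshU) 2 i 2 i \/
  contains_cal w [:: 3; 1; 4; 2] (predU3 meshR meshU meshD) 2 i 2 i \/
  contains_cal w [:: 2; 4; 1; 3] (predU3 meshR meshU meshD) 2 i 2 i.
Proof.
move=> _ [s0 [hr0 hi0]] hunc [s1 [hr1 hi1]] [s2 [hr2 hi2]].
have [hv0 hw0 hs0] := reduced_tight hr0.
have [hv1 hw1 hs1] := reduced_tight hr1.
have [hv2 hw2 hs2] := reduced_tight hr2.
have [hc0 [hu1 hu2]] := hunc s0 hr0.
have hi1n := valid_mem hv1 hi1.
have hi2n := valid_mem hv2 hi2.
have hin : 0 < i < n by clear -hi1n hi2n; lia.
move: hu1 hu2 hc0.
set k := index i s0.
set L := take k s0; set R := drop k.+1 s0.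
move=> hu1 hu2 hc0.
have es0 : s0 = L ++ i :: R.
  by rewrite /L /R -{1}(cat_take_drop k s0) (drop_nth i) ?index_mem // nth_index.
have [hiL hiR] : i \notin L /\ i \notin R.
  move: hc0; rewrite es0 count_cat /= eqxx /= => hc.
  have hc2 : count_mem i L + (1 + count_mem i R) = 1 := hc. have h1 : count_mem i L = 0 by clear -hc2; lia.
  have h2 : count_mem i R = 0 by clear -hc2; lia.
  by split; apply/count_memPn.
have hs0' : size (L ++ i :: R) = ninv (word_perm n (L ++ i :: R)) by rewrite -es0 hw0.
have hv0' : valid_word n (L ++ i :: R) by rewrite -es0.
have htL := tight_catl hv0' hs0'.
have htiR := tight_catr hv0' hs0'.
move: (hv0'); rewrite valid_cat => /andP[hvL hviR].
have htR := tight_cons hviR htiR.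
move: (hviR) => /andP[_ hvR].
set u := word_perm n L; set v := word_perm n R.
have [o1 [o2 [ho1 ho2 hsg]]] := sgm_tperm hin.
have hwx : forall x, w x = u (tperm o1 o2 (v x)).
  by move=> x; rewrite -hw0 es0 wp_cat wp_cons hsg !permM.
have hm1 : (i.-1 \in L) || (i.-1 \in R).
  have [x [y [hx hy hxy]]] := cross hv1 (etrans hs1 (congr1 _ (esym hw1))) hi1.
  case: (boolP (i.-1 \in s0)) => h.
    move: h; rewrite es0 mem_cat in_cons; case/orP => [->//|/orP[/eqP|->]]; last by rewrite orbT.
    by clear -hin; lia.
  have P := pres hv0 h; have Px := P x; have Py := P y; rewrite hw0 -hw1 in Px Py.
  by clear -Px Py hx hy hxy; lia.
have hm2 : (i.+1 \in L) || (i.+1 \in R).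
  have [x [y [hx hy hxy]]] := cross hv2 (etrans hs2 (congr1 _ (esym hw2))) hi2.
  case: (boolP (i.+1 \in s0)) => h.
    move: h; rewrite es0 mem_cat in_cons; case/orP => [->//|/orP[/eqP|->]]; last by rewrite orbT.
    by clear -hin; lia.
  have P := pres hv0 h; have Px := P x; have Py := P y; rewrite hw0 -hw2 in Px Py.
  by clear -Px Py hx hy hxy; lia.
have hi0' : 0 < i by case/andP: hin.
have [GL1 GL2] := Gfix hvL htL hiL ho1 ho2 hi0'.
have [GR1 GR2] := Gfix hvR htR hiR ho1 ho2 hi0'.
have PL := pres hvL hiL; have PR := pres hvR hiR.
pose a0 := ((word_perm n R)^-1)%g o1; pose b0 := ((word_perm n R)^-1)%g o2.
have va0 : word_perm n R a0 = o1 by rewrite permKV.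
have vb0 : word_perm n R b0 = o2 by rewrite permKV.
have ha0 : a0 < i.
  have := PR a0; rewrite va0 ho1 => <-; by clear -hi0'; lia.
have hb0 : i <= b0.
  have := PR b0; rewrite vb0 ho2 ltnn => e; by rewrite leqNgt -e.
have wa0 : w a0 = word_perm n L o2 by rewrite hwx va0 tpermL.
have wb0 : w b0 = word_perm n L o1 by rewrite hwx vb0 tpermR.
have uo2 : i <= word_perm n L o2 by rewrite leqNgt PL ho2 ltnn.
have uo1 : word_perm n L o1 < i by rewrite PL ho1; clear -hi0'; lia.
have F1' : forall x : 'I_n, x < i -> x != a0 -> w x < i.
  move=> x hx hxa; rewrite hwx tpermD.
  - by rewrite PL PR.
  - by apply/eqP => e; move/eqP: hxa; apply; rewrite /a0 e permK.
  - apply/eqP => e; have := PR x; rewrite -e ho2 => h; clear -h hx; lia.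
have F2' : forall x : 'I_n, i <= x -> x != b0 -> i <= w x.
  move=> x hx hxb; rewrite hwx tpermD.
  - by rewrite leqNgt PL PR -leqNgt.
  - apply/eqP => e; have := PR x; rewrite -e ho1 => h; clear -h hx hi0'; lia.
  - by apply/eqP => e; move/eqP: hxb; apply; rewrite /b0 e permK.
have hWA : oneline w a0.+1 = (word_perm n L o2).+1 by rewrite oneline_ord wa0.
have hWB : oneline w b0.+1 = (word_perm n L o1).+1 by rewrite oneline_ord wb0.
have HF1 : forall x, 0 < x <= i -> x = a0.+1 \/ oneline w x <= i.
  move=> x hx; have [o eo] : exists o : 'I_n, x = o.+1.
    by apply: ord_of; clear -hx hin; lia.
  subst x.
  rewrite oneline_ord; case: (eqVneq o a0) => [->|h]; first by left.
  right; have := F1' o ltac:(clear -hx; lia) h => h'; clear -h'; lia.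
have HF2 : forall x, i < x <= n -> x = b0.+1 \/ i < oneline w x.
  move=> x hx; have [o eo] : exists o : 'I_n, x = o.+1.
    by apply: ord_of; clear -hx hin; lia.
  subst x.
  rewrite oneline_ord; case: (eqVneq o b0) => [->|h]; first by left.
  right; have := F2' o ltac:(clear -hx; lia) h => h'; clear -h'; lia.
apply: (core (Wgood_oneline w) _ _ _ _ HF1 HF2
          (xL1 := i.-1 \in L) (xR1 := i.-1 \in R) (xL2 := i.+1 \in L) (xR2 := i.+1 \in R)).
- by clear -ha0; lia.
- by have := ltn_ord b0; clear -hb0; lia.
- by rewrite hWA.
- by rewrite hWB.
- rewrite hWB -GL1; by apply/eqP/eqP => h; clear -h hi0'; lia.
- rewrite -GR1; apply/eqP/eqP => h.
    have e : a0 = o1 by apply: val_inj => /=; rewrite ho1; clear -h; lia.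
    by rewrite -{1}e va0 ho1.
  have e : word_perm n R o1 = o1 by apply: val_inj => /=; rewrite h ho1.
  have e2 : a0 = o1 by rewrite /a0 -{1}e permK.
  by rewrite e2 ho1; clear -hi0'; lia.
- rewrite hWA -GL2; by apply/eqP/eqP => h; clear -h; lia.
- rewrite -GR2; apply/eqP/eqP => h.
    have e : b0 = o2 by apply: val_inj => /=; rewrite ho2; clear -h; lia.
    by rewrite -{1}e vb0 ho2.
  have e : word_perm n R o2 = o2 by apply: val_inj => /=; rewrite h ho2.
  have e2 : b0 = o2 by rewrite /b0 -{1}e permK.
  by rewrite e2 ho2.
- exact: hm1.
- by apply/negP => /andP[h1 h2]; apply: hu2; rewrite hi0' h1 h2.
- exact: hm2.
- by apply/negP.
Qed.
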